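(* Let $R$ be a commutative ring with nonzero identity and $\delta$ an expansion of ideals of $R$. (1) Let $I$ be a $\delta$-primary ideal of $R$ with $\delta(I)\neq R$. Then $I$ is a $\delta$-$n$-ideal of $R$ if and only if $I\subseteq\sqrt{0}$. (2) Let $I$ be a prime ideal of $R$ with $\delta(I)\neq R$. Then $I$ is a $\delta$-$n$-ideal of $R$ if and only if $I=\sqrt{0}$.
   Context: An expansion of ideals of a ring $R$ is a map $\delta$ from the set of ideals of $R$ to itself such that $I\subseteq\delta(I)$ for every ideal $I$, and $\delta(I)\subseteq\delta(J)$ whenever $I\subseteq J$. $\sqrt{0}$ denotes the nilradical of $R$. Given an expansion $\delta$, a proper ideal $I$ of $R$ is a $\delta$-$n$-ideal if whenever $a,b\in R$ with $ab\in I$ and $a\notin\sqrt{0}$, then $b\in\delta(I)$; it is $\delta$-primary if whenever $a,b\in R$ with $ab\in I$ and $a\notin I$, then $b\in\delta(I)$. *)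

(* Defs.v *)
From mathcomp Require Import all_boot all_algebra.
Set Implicit Arguments. Unset Strict Implicit. Unset Printing Implicit Defensive.
Import GRing.Theory.
Local Open Scope ring_scope.

Section Defs.
Variable R : comNzRingType.

Definition incl_pred (I J : R -> Prop) : Prop := forall x, I x -> J x.

Definition is_ideal (I : R -> Prop) : Prop :=
  [/\ I 0,
      (forall x y, I x -> I y -> I (x + y)) &
      (forall r x, I x -> I (r * x))].

Definition proper_set (I : R -> Prop) : Prop := exists x, ~ I x.

Definition proper_ideal (I : R -> Prop) : Prop := is_ideal I /\ proper_set I.

Definition prime_ideal (I : R -> Prop) : Prop :=
  proper_ideal I /\ (forall a b, I (a * b) -> I a \/ I b).

Definition nilrad (x : R) : Prop := exists n : nat, x ^+ n = 0.

(* An expansion: a map from the set of ideals to itself, extensive and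
   monotone. Its values on non-ideal predicates are irrelevant. *)
Definition expansion (delta : (R -> Prop) -> (R -> Prop)) : Prop :=
  [/\ (forall I, is_ideal I -> is_ideal (delta I)),
      (forall I, is_ideal I -> incl_pred I (delta I)) &
      (forall I J, is_ideal I -> is_ideal J -> incl_pred I J ->
                   incl_pred (delta I) (delta J))].

Definition delta_n_ideal (delta : (R -> Prop) -> (R -> Prop)) (I : R -> Prop) :=
  proper_ideal I /\
  (forall a b, I (a * b) -> ~ nilrad a -> delta I b).

Definition delta_primary (delta : (R -> Prop) -> (R -> Prop)) (I : R -> Prop) :=
  proper_ideal I /\
  (forall a b, I (a * b) -> ~ I a -> delta I b).

End Defs.

(* Main.v *)
Require Import Defs.
From mathcomp Require Import all_boot all_algebra.
From Stdlib Require Import Classical FunctionalExtensionality PropExtensionality.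
Import GRing.Theory.
Local Open Scope ring_scope.

Lemma not_nil_in (R : comNzRingType) (delta : (R -> Prop) -> (R -> Prop)) I :
  expansion delta -> delta_n_ideal delta I -> proper_set (delta I) ->
  incl_pred I (@nilrad R).
Proof.
move=> [Hid _ _] [[HI _] Hn] [y Hy] x Ix.
apply: NNPP => Hx.
apply: Hy.
have H1 : delta I 1 by apply: (Hn x 1) => //; rewrite mulr1.
have [_ _ Hm] := Hid I HI.
by rewrite -[y]mulr1; apply: Hm.
Qed.

Lemma prime_nil (R : comNzRingType) (I : R -> Prop) :
  prime_ideal I -> incl_pred (@nilrad R) I.
Proof.
move=> [[[I0 _ Hm] [z Hz]] Hp] x [n Hxn].
suff H : forall k, I (x ^+ k) -> I x by apply: (H n); rewrite Hxn.
elim=> [|k IH].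
  rewrite expr0 => I1; exfalso; apply: Hz; rewrite -[z]mulr1; exact: Hm.
rewrite exprS => Hi.
by case: (Hp _ _ Hi) => // /IH.
Qed.

Theorem proposition2p6 (R : comNzRingType) (delta : (R -> Prop) -> (R -> Prop)) :
  expansion delta ->
  (forall I : R -> Prop, delta_primary delta I -> proper_set (delta I) ->
     (delta_n_ideal delta I <-> incl_pred I (@nilrad R))) /\
  (forall I : R -> Prop, prime_ideal I -> proper_set (delta I) ->
     (delta_n_ideal delta I <-> I = @nilrad R)).
Proof.
move=> Hd; split.
  move=> I [HpI Hpr] Hprop; split; first by move=> H; exact: not_nil_in H Hprop.
  move=> Hsub; split => // a b Hab Ha.
  apply: (Hpr a b Hab) => Ia; apply: Ha; exact: Hsub.
move=> I HP Hprop; split.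
  move=> H; apply: functional_extensionality => x.
  apply: propositional_extensionality; split.
    move=> Ix; exact: (@not_nil_in R delta I Hd H Hprop x Ix).
  move=> Nx; exact: (@prime_nil R I HP x Nx).
move=> EI; have [HpI Hp] := HP; split => // a b Hab Ha.
have [_ Hinc _] := Hd.
apply: (Hinc I (proj1 HpI)).
case: (Hp _ _ Hab) => // Ia; exfalso; apply: Ha; by rewrite -EI.
Qed.
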